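(* Let $n\ge 1$ and let $G_1,\ldots,G_n$ be finite simple graphs with pairwise disjoint vertex sets. For each $1\le i\le n$ let $A_i\subseteq V(G_i)$ be a subset such that (a) $t_i:=\alpha(G_i)-\alpha(G_i\setminus A_i)$ is an odd integer with $t_i\ge 1$; (b) $\deg(G_i)-\deg(G_i\setminus A_i)=t_i-1$; (c) the leading coefficients of the $2n$ polynomials $h_{G_1}(t),\ldots,h_{G_n}(t),h_{G_1\setminus A_1}(t),\ldots,h_{G_n\setminus A_n}(t)$ are either all positive or all negative. Let $H_n$ be the graph with vertex set $V(H_n)=V(G_1)\cup\cdots\cup V(G_n)\cup\{y_1,\ldots,y_n\}$ (the $y_i$ new vertices) and edge set $E(H_n)=E(G_1)\cup\cdots\cup E(G_n)\cup\{\{y_i,x\}\mid x\in A_i,\ 1\le i\le n\}\cup\{\{y_i,y_j\}\mid i\ne j\}$. Let $R=\mathbb{K}[V(H_n)]$. Then $$\dim(R/I(H_n))=\sum_{i=1}^n\alpha(G_i)\quad\text{and}\quad \deg\big(h_{R/I(H_n)}(t)\big)=1+\sum_{i=1}^n\deg(G_i).$$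
   Context: All graphs are finite and simple. For a graph $G$ with vertex set $V(G)$, let $\mathbb{K}[V(G)]$ be the polynomial ring over a field $\mathbb{K}$ whose variables are the vertices, and let the edge ideal be $I(G)=(x_ix_j\mid \{x_i,x_j\}\in E(G))$ (so $I(G)=0$ if $G$ has no edges). For a homogeneous ideal $I$ of $S=\mathbb{K}[V(G)]$ (standard grading), the Hilbert series $\sum_{i\ge0}\dim_{\mathbb{K}}(S/I)_it^i$ can be written uniquely as $h_{S/I}(t)/(1-t)^{\dim(S/I)}$ with $h_{S/I}(t)\in\mathbb{Z}[t]$ and $h_{S/I}(1)\neq 0$; $h_{S/I}(t)$ is the $h$-polynomial. Write $h_G(t):=h_{\mathbb{K}[V(G)]/I(G)}(t)$ and $\deg(G):=\deg h_G(t)$. An independent set is a set of vertices with no edges among them; $\alpha(G)$ is the maximum size of an independent set (so $\dim \mathbb{K}[V(G)]/I(G)=\alpha(G)$). For $A\subseteq V(G)$, $G\setminus A$ denotes the induced subgraph on $V(G)\setminus A$ (with polynomial ring $\mathbb{K}[V(G)\setminus A]$); if $V(G)\setminus A=\emptyset$ then $\alpha(G\setminus A)=0$ and $h_{G\setminus A}(t)=1$. *)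

(* Defs.v *)
From mathcomp Require Import all_boot all_order all_algebra.
Set Implicit Arguments. Unset Strict Implicit. Unset Printing Implicit Defensive.
Import Order.TTheory GRing.Theory Num.Theory.

Record graph (T : finType) := Graph { verts : {set T}; adj : rel T }.

Definition simple_graph (T : finType) (G : graph T) : Prop :=
  [/\ symmetric (adj G), irreflexive (adj G) &
      forall x y, adj G x y -> (x \in verts G) && (y \in verts G)].

Definition independent (T : finType) (G : graph T) (F : {set T}) : bool :=
  (F \subset verts G) && [forall x in F, forall y in F, ~~ adj G x y].

Definition alpha (T : finType) (G : graph T) : nat :=
  \max_(F : {set T} | independent G F) #|F|.

Definition delv (T : finType) (G : graph T) (A : {set T}) : graph T :=
  Graph (verts G :\: A)
        (fun x y => [&& adj G x y, x \in verts G :\: A & y \in verts G :\: A]).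

(* Monomials of degree i in K[V(G)] are exponent vectors m : T -> nat supported
   on V(G) with total degree i (each exponent is then < i.+1).
   A monomial lies in the monomial ideal I(G) iff it is divisible by some
   generator x_u x_v with {u,v} an edge. *)
Definition monomial_deg (T : finType) (G : graph T) (i : nat)
  (m : {ffun T -> 'I_i.+1}) : bool :=
  (\sum_(x : T) (m x : nat) == i) && [forall x, (x \notin verts G) ==> (m x == ord0)].

Definition in_edge_ideal (T : finType) (G : graph T) (i : nat)
  (m : {ffun T -> 'I_i.+1}) : bool :=
  [exists x, exists y, [&& adj G x y, x \in verts G, y \in verts G,
                           0 < m x & 0 < m y]].

(* Hilbert function: dim_K (K[V(G)]/I(G))_i = number of standard monomials
   (monomials of degree i not in I(G)), since I(G) is a monomial ideal. *)
Definition hilb_fun (T : finType) (G : graph T) (i : nat) : nat :=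
  #|[set m : {ffun T -> 'I_i.+1} | monomial_deg G m && ~~ in_edge_ideal G m]|.

(* [is_hilb G d h] : the Hilbert series sum_i HF(i) t^i equals h(t)/(1-t)^d
   with h(1) <> 0, i.e. (1-t)^d * HS(t) = h(t) coefficientwise. By uniqueness,
   d = dim K[V(G)]/I(G) and h = h_G. *)
Definition is_hilb (T : finType) (G : graph T) (d : nat) (h : {poly int}) : Prop :=
  (h.[1] != 0)%R /\
  forall i : nat,
    (h`_i = \sum_(k < (minn i d).+1)
              ((-1) ^+ k * ('C(d, k))%:R * (hilb_fun G (i - k)%N)%:R))%R.

Definition pdeg (p : {poly int}) : nat := (size p).-1.

(* The graph H_n on V(G_1) u ... u V(G_n) u {y_1,...,y_n}; the new vertex y_j
   is represented by inr j. *)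
Definition Hn (T : finType) (n : nat) (G : 'I_n -> graph T) (A : 'I_n -> {set T})
  : graph (T + 'I_n)%type :=
  Graph [set v : (T + 'I_n)%type |
           match v with inl x => [exists i, x \in verts (G i)] | inr _ => true end]
        (fun u v => match u, v with
                    | inl x, inl y =>
                        [exists i, [&& adj (G i) x y, x \in verts (G i) & y \in verts (G i)]]
                    | inl x, inr j => x \in A j
                    | inr j, inl x => x \in A j
                    | inr i, inr j => i != j
                    end).

(* Main.v *)
Require Import Defs.
From mathcomp Require Import all_boot all_order all_algebra.
From mathcomp Require Import ring lra zify.
Import Order.TTheory GRing.Theory Num.Theory.
Local Open Scope ring_scope.

Definition eqN (N : nat) (p q : {poly int}) := forall i, (i < N)%N -> p`_i = q`_i.

Lemma eqN_refl N p : eqN N p p. Proof. by []. Qed.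
Lemma eqN_sym N p q : eqN N p q -> eqN N q p.
Proof. by move=> H i Hi; rewrite H. Qed.
Lemma eqN_trans N p q r : eqN N p q -> eqN N q r -> eqN N p r.
Proof. by move=> H1 H2 i Hi; rewrite H1 ?H2. Qed.
Lemma eqN_mull N r p q : eqN N p q -> eqN N (r * p) (r * q).
Proof.
move=> H i Hi; rewrite !coefM; apply: eq_bigr => j _; rewrite H //.
exact: leq_ltn_trans (leq_subr _ _) Hi.
Qed.
Lemma eqN_add N p q p' q' : eqN N p p' -> eqN N q q' -> eqN N (p + q) (p' + q').
Proof. by move=> H1 H2 i Hi; rewrite !coefD H1 ?H2. Qed.
Lemma eqN_sum N (I : finType) (P : pred I) (F F' : I -> {poly int}) :
  (forall j, P j -> eqN N (F j) (F' j)) ->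
  eqN N (\sum_(j | P j) F j) (\sum_(j | P j) F' j).
Proof.
move=> H i Hi; rewrite !coef_sum; apply: eq_bigr => j Pj; exact: H.
Qed.

Fixpoint cc (k s : nat) : nat :=
  if k is k'.+1 then (\sum_(u < s) cc k' u)%N else (s == 0)%N.

Definition CN k N : {poly int} := \poly_(i < N) (cc k i)%:R.

Lemma CN_step k N : eqN N ((1 - 'X) * CN k.+1 N) ('X * CN k N).
Proof.
move=> i Hi; rewrite mulrBl mul1r coefB !coefXM !coef_poly Hi.
case: i Hi => [|i] Hi /=; first by rewrite big_ord0 subr0.
rewrite (ltnW Hi) big_ord_recr /= natrD addrAC subrr add0r //.
Qed.

Lemma CN_id k N : eqN N ((1 - 'X) ^+ k * CN k N) ('X ^+ k).
Proof.
elim: k => [|k IH].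
  move=> i Hi; rewrite expr0 mul1r coef_poly Hi coefXn /=.
  by case: (i == 0%N).
rewrite exprSr -mulrA.
eapply eqN_trans; first exact: (eqN_mull _ ((1 - 'X) ^+ k) _ _ (CN_step k N)).
rewrite mulrCA exprSr (mulrC _ 'X).
exact: eqN_mull.
Qed.

Definition HSN (T : finType) (G : graph T) N : {poly int} :=
  \poly_(i < N) (hilb_fun G i)%:R.
Arguments HSN {T}.

Lemma coef_1subX d j : ((1 - 'X) ^+ d)`_j = (-1) ^+ j * ('C(d, j))%:R :> int.
Proof.
elim: d j => [|d IH] j.
  by rewrite expr0 coefC; case: j => [|j] //=; rewrite bin0n mulr0.
rewrite exprS mulrBl mul1r coefB coefXM IH.
case: j => [|j] /=; first by rewrite !bin0 subr0.
by rewrite IH binS natrD exprS; ring.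
Qed.

Lemma is_hilb_eqN (T : finType) (G : graph T) d h :
  is_hilb G d h -> forall N, eqN N h ((1 - 'X) ^+ d * HSN G N).
Proof.
move=> [_ H] N i Hi; rewrite H coefM.
have le1 : ((minn i d).+1 <= i.+1)%N by rewrite ltnS geq_minl.
rewrite (big_ord_widen i.+1 (fun k => (-1) ^+ k * ('C(d, k))%:R * (hilb_fun G (i - k))%:R) le1).
rewrite big_mkcond; apply: eq_bigr => j _ /=.
rewrite coef_1subX coef_poly.
have -> : (i - j < N)%N by apply: leq_ltn_trans (leq_subr _ _) Hi.
case: ifP => // /negbT; rewrite ltnS -ltnNge => Hj.
have Hdj : (d < j)%N.
  have := ltn_ord j; rewrite ltnS => Hji.
  move: Hj; rewrite /minn; case: ifP => //; move=> _ H1; lia.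
by rewrite bin_small // mulr0 mul0r.
Qed.

Lemma uniq_le {S : nat -> {poly int}} {d d' h h'} :
  (d <= d')%N -> h'.[1] != 0 ->
  (forall N, eqN N h ((1 - 'X) ^+ d * S N)) ->
  (forall N, eqN N h' ((1 - 'X) ^+ d' * S N)) -> d = d' /\ h = h'.
Proof.
move=> le Hn1 H H'.
have E : (1 - 'X) ^+ (d' - d) * h = h'.
  apply/polyP => i.
  have := eqN_mull _ ((1 - 'X) ^+ (d' - d)) _ _ (H i.+1) i (ltnSn i).
  rewrite mulrA -exprD subnK // => ->.
  by rewrite (H' i.+1).
case: (ltnP d d') => [lt|ge].
  2: have deq : d = d' by apply/eqP; rewrite eqn_leq le ge.
  2: by split => //; rewrite -E deq subnn expr0 mul1r.
exfalso; move: Hn1; rewrite -E hornerM horner_exp !hornerE subrr expr0n.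
by rewrite subn_eq0 leqNgt lt mul0r eqxx.
Qed.

Lemma uniq_hilb (S : nat -> {poly int}) d d' h h' :
  h.[1] != 0 -> h'.[1] != 0 ->
  (forall N, eqN N h ((1 - 'X) ^+ d * S N)) ->
  (forall N, eqN N h' ((1 - 'X) ^+ d' * S N)) -> d = d' /\ h = h'.
Proof.
move=> H1 H2 E1 E2; case: (leqP d d') => le; first exact: (uniq_le le H2 E1 E2).
by have [-> ->] := uniq_le (ltnW le) H1 E2 E1.
Qed.

Section Count.
Variable T : finType.
Local Close Scope ring_scope.

Definition supp i (m : {ffun T -> 'I_i.+1}) : {set T} := [set x | (0 < m x)%N].
Arguments supp {i}.

Definition cntI i s (F : {set T}) :=
  #|[set m : {ffun T -> 'I_i.+1} | (supp m == F) && ((\sum_x (m x : nat))%N == s)]|.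

Lemma cntI0 i s : cntI i s set0 = cc 0 s.
Proof.
rewrite /cntI /=.
have -> : [set m : {ffun T -> 'I_i.+1} | (supp m == set0) && ((\sum_x (m x : nat))%N == s)]
   = [set m | (m == [ffun => ord0]) && (s == 0)%N].
  apply/setP => m; rewrite !inE.
  case E: (m == [ffun => ord0]).
    move/eqP: E => ->; rewrite big1 => [|y _]; last by rewrite ffunE.
    have -> : supp [ffun=> (ord0 : 'I_i.+1)] = set0 by apply/setP => y; rewrite !inE ffunE.
    by rewrite eqxx eq_sym.
  apply/negbTE; apply/negP => /andP [/eqP Hs _]; move/negbT: E => /negP; apply.
  apply/eqP/ffunP => y; rewrite ffunE; apply/val_inj => /=.
  have : y \notin supp m by rewrite Hs inE.
  by rewrite inE -eqn0Ngt => /eqP.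
case: s => [|s] /=.
  by rewrite (_ : [set m | _] = [set [ffun => ord0]]) ?cards1 //; apply/setP => m; rewrite !inE andbT.
by rewrite (_ : [set m | _] = set0) ?cards0 //; apply/setP => m; rewrite !inE andbF.
Qed.

Lemma sum_shift (f : nat -> nat) i s : (s <= i)%N ->
  (\sum_(v < i.+1) (if (0 < v) && (v <= s) then f (s - v) else 0))%N = (\sum_(u < s) f u)%N.
Proof.
move=> le.
rewrite -(big_mkord xpredT (fun v => if (0 < v) && (v <= s) then f (s - v) else 0%N)).
rewrite (@big_cat_nat _ _ _ s.+1 0 i.+1) ?ltnS //=.
rewrite [X in (_ + X)%N]big1_seq ?addn0; last first.
  move=> v /andP [_]; rewrite mem_index_iota => /andP [H1 _].
  by rewrite (leqNgt v s) H1 andbF.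
rewrite big_nat_recl //= add0n -(big_mkord xpredT f) big_nat_rev /=.
apply: eq_big_nat => v /andP [_ Hv]; rewrite add0n ifT; [congr f; lia | lia].
Qed.

Lemma sum_bigD1 i (m : {ffun T -> 'I_i.+1}) x :
  \sum_y (m y : nat) = m x + \sum_(y | y != x) (m y : nat).
Proof. by rewrite (bigD1 x). Qed.
Arguments sum_bigD1 {i}.

Lemma cntI_step i s (F : {set T}) x : x \in F -> s <= i ->
  cntI i s F = \sum_(u < s) cntI i u (F :\ x).
Proof.
move=> xF le; rewrite /cntI.
set S := [set m : {ffun T -> 'I_i.+1} | (supp m == F) && (\sum_x0 (m x0 : nat) == s)].
set S' := fun t => [set m : {ffun T -> 'I_i.+1} | (supp m == F :\ x) && (\sum_x0 (m x0 : nat) == t)].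
have -> : #|S| = \sum_(v < i.+1) #|[set m in S | m x == v]|.
  rewrite -sum1_card (partition_big (fun m : {ffun T -> 'I_i.+1} => m x) xpredT) //=.
  apply: eq_bigr => v _; rewrite -sum1_card; apply: eq_bigl => m; by rewrite !inE.
rewrite -(@sum_shift (fun u => #|S' u|) i s le).
apply: eq_bigr => v _.
case: ifP => [/andP [v0 vs] | Hv].
  pose setx := fun (m' : {ffun T -> 'I_i.+1}) => [ffun y => if y == x then v else m' y].
  have -> : [set m in S | m x == v] = setx @: S' (s - v).
    apply/setP => m; rewrite inE; apply/idP/imsetP.
      rewrite inE => /andP [/andP [/eqP Hsupp /eqP Hsum] /eqP Hmx].
      exists [ffun y => if y == x then ord0 else m y].
        rewrite inE; apply/andP; split.
          apply/eqP/setP => y; rewrite !inE ffunE; case: (y =P x) => //= _.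
          by rewrite -Hsupp inE.
        rewrite (sum_bigD1 _ x) ffunE eqxx add0n; apply/eqP.
        rewrite -Hsum (sum_bigD1 m x) Hmx addKn; apply: eq_bigr => y Hy.
        by rewrite ffunE (negbTE Hy).
      by apply/ffunP => y; rewrite !ffunE; case: (y =P x) => [->|].
    move=> [m' Hm' ->]; move: Hm'; rewrite !inE => /andP [/eqP Hsupp /eqP Hsum].
    rewrite /setx ffunE eqxx eqxx andbT; apply/andP; split.
      apply/eqP/setP => y; rewrite !inE ffunE; case: (y =P x) => [->|/eqP ne] //.
        by rewrite v0 xF.
      by have := f_equal (fun X : {set T} => y \in X) Hsupp; rewrite !inE ne.
    rewrite (sum_bigD1 _ x) ffunE eqxx.
    rewrite (eq_bigr (fun y => (m' y : nat))); last by move=> y Hy; rewrite ffunE (negbTE Hy).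
    have m'x : (m' x : nat) = 0.
      apply/eqP; rewrite eqn0Ngt.
      have := f_equal (fun X : {set T} => x \in X) Hsupp; rewrite !inE eqxx /= => ->; done.
    by move: Hsum; rewrite (sum_bigD1 m' x) m'x add0n => ->; rewrite subnKC.
  rewrite card_in_imset //.
  move=> m1 m2; rewrite !inE => /andP [/eqP H1 _] /andP [/eqP H2 _] E.
  apply/ffunP => y; have := congr1 (fun f : {ffun T -> 'I_i.+1} => f y) E.
  rewrite !ffunE; case: (y =P x) => [-> _|_ ->] //.
  apply/val_inj => /=.
  have h1 : x \notin supp m1 by rewrite H1 !inE eqxx.
  have h2 : x \notin supp m2 by rewrite H2 !inE eqxx.
  move: h1 h2; rewrite !inE -!eqn0Ngt => /eqP -> /eqP -> //.
apply/eqP; rewrite cards_eq0; apply/eqP/setP => m; rewrite !inE.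
apply/negP => /andP [/andP [/eqP Hsupp /eqP Hsum] /eqP Hmx].
move: Hv; have : x \in supp m by rewrite Hsupp.
rewrite inE Hmx => -> /=; rewrite -Hmx -Hsum (sum_bigD1 m x) leq_addr //.
Qed.

Lemma cntI_eq i k : forall (F : {set T}) s, #|F| = k -> s <= i -> cntI i s F = cc k s.
Proof.
elim: k => [|k IH] F s HF le.
  by move/cards0_eq: HF => ->; rewrite cntI0.
have : 0 < #|F| by rewrite HF.
case/card_gt0P => x xF.
rewrite (cntI_step _ _ _ _ xF le) /=; apply: eq_bigr => u _; apply: IH.
  by move: HF; rewrite (cardsD1 x F) xF add1n => [[]].
exact: ltnW (leq_trans (ltn_ord u) le).
Qed.

Lemma std_supp (G : graph T) i (m : {ffun T -> 'I_i.+1}) :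
  (monomial_deg G m && ~~ in_edge_ideal G m) =
  independent G (supp m) && (\sum_x (m x : nat) == i).
Proof.
rewrite /monomial_deg /independent /in_edge_ideal.
apply/idP/idP.
  move=> /andP [/andP [Hs /forallP Hv] Hn]; rewrite Hs andbT; apply/andP; split.
    apply/subsetP => x; rewrite inE => Hx; apply/negPn/negP => Hnv.
    by have := Hv x; rewrite Hnv /= => /eqP Hm; rewrite Hm in Hx.
  apply/forallP => x; apply/implyP; rewrite inE => Hx.
  apply/forallP => y; apply/implyP; rewrite inE => Hy.
  apply/negP => Hxy; move/negP: Hn; apply; apply/existsP; exists x; apply/existsP; exists y.
  rewrite Hxy Hx Hy !andbT /=.
  have vx : x \in verts G.
    apply/negPn/negP => Hnv; by have := Hv x; rewrite Hnv /= => /eqP Hm; rewrite Hm in Hx.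
  have vy : y \in verts G.
    apply/negPn/negP => Hnv; by have := Hv y; rewrite Hnv /= => /eqP Hm; rewrite Hm in Hy.
  by rewrite vx vy.
move=> /andP [/andP [/subsetP Hsub /forallP Hind] Hs]; rewrite Hs /=; apply/andP; split.
  apply/forallP => x; apply/implyP => Hx; apply/eqP/val_inj => /=; apply/eqP.
  rewrite eqn0Ngt; apply/negP => Hp; move/negP: Hx; apply; apply: Hsub; by rewrite inE.
apply/negP => /existsP [x /existsP [y /and5P [Hxy _ _ Hx Hy]]].
have := Hind x; rewrite inE Hx /= => /forallP /(_ y); rewrite inE Hy /=.
by rewrite Hxy.
Qed.

Lemma hilb_faces (G : graph T) i :
  hilb_fun G i = \sum_(F | independent G F) cc #|F| i.
Proof.
rewrite /hilb_fun -sum1_card.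
rewrite (partition_big (fun m : {ffun T -> 'I_i.+1} => supp m) (independent G)) /=; last first.
  by move=> m; rewrite inE std_supp => /andP [].
apply: eq_bigr => F HF.
rewrite -(@cntI_eq i #|F| F i) // /cntI -sum1_card; apply: eq_bigl => m.
rewrite !inE std_supp.
case E: (supp m == F) => /=; last by rewrite andbF.
by move/eqP: E => ->; rewrite HF andbT.
Qed.
End Count.

Lemma HSN_faces (T : finType) (G : graph T) N :
  HSN G N = \sum_(F | independent G F) CN #|F| N.
Proof.
apply/polyP => i; rewrite coef_poly coef_sum.
under eq_bigr do rewrite coef_poly.
case: (i < N)%N; last by rewrite big1.
by rewrite hilb_faces natr_sum.
Qed.
Arguments HSN_faces {T}.

Lemma eqN_series (I : finType) (P : pred I) (k : I -> nat) D N :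
  (forall j, P j -> (k j <= D)%N) ->
  eqN N ((1 - 'X) ^+ D * \sum_(j | P j) CN (k j) N)
        (\sum_(j | P j) 'X ^+ (k j) * (1 - 'X) ^+ (D - k j)).
Proof.
move=> H; rewrite mulr_sumr; apply: eqN_sum => j Pj.
rewrite -{1}(subnK (H j Pj)) exprD -mulrA (mulrC 'X^_).
exact: eqN_mull (CN_id _ _).
Qed.

Definition hpoly (T : finType) (G : graph T) : {poly int} :=
  \sum_(F | independent G F) 'X ^+ #|F| * (1 - 'X) ^+ (alpha G - #|F|).
Arguments hpoly {T}.

Lemma face_le_alpha (T : finType) (G : graph T) F : independent G F -> (#|F| <= alpha G)%N.
Proof. by move=> H; apply: (leq_bigmax_cond (F := fun F : {set T} => #|F|)). Qed.
Arguments face_le_alpha {T}.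

Lemma indep0 (T : finType) (G : graph T) : independent G set0.
Proof.
rewrite /independent sub0set /=; apply/forallP => x; by rewrite inE.
Qed.
Arguments indep0 {T}.

Lemma max_face (T : finType) (G : graph T) : exists2 F, independent G F & #|F| = alpha G.
Proof.
case: (@arg_maxnP _ set0 (independent G) (fun F => #|F|) (indep0 G)) => F0 HF0 Hmax.
exists F0 => //; apply/eqP; rewrite eqn_leq face_le_alpha //=.
by apply/bigmax_leqP => F HF; apply: Hmax.
Qed.
Arguments max_face {T}.

Lemma hpoly_eqN (T : finType) (G : graph T) N :
  eqN N (hpoly G) ((1 - 'X) ^+ alpha G * HSN G N).
Proof.
apply: eqN_sym; rewrite HSN_faces /hpoly.
apply: eqN_series => F; exact: face_le_alpha.
Qed.
Arguments hpoly_eqN {T}.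

Lemma hpoly1 (T : finType) (G : graph T) : 0 < (hpoly G).[1].
Proof.
rewrite /hpoly horner_sum.
have [F0 H0 E0] := max_face G.
rewrite (bigD1 F0) //= hornerM horner_exp hornerX expr1n mul1r horner_exp !hornerE E0 subnn expr0.
apply: ltr_pwDl => //; apply: sumr_ge0 => F _.
by rewrite hornerM !horner_exp !hornerE expr1n mul1r subrr exprn_ge0.
Qed.
Arguments hpoly1 {T}.

Lemma hilb_unique (T : finType) (G : graph T) d h :
  is_hilb G d h -> d = alpha G /\ h = hpoly G.
Proof.
move=> Hh; have [H1 _] := Hh.
apply: (@uniq_hilb (HSN G) d (alpha G) h (hpoly G) H1 _ (@is_hilb_eqN _ G d h Hh) (hpoly_eqN G)).
by rewrite gt_eqF ?hpoly1.
Qed.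

Local Close Scope ring_scope.


Lemma indepP {T : finType} {G : graph T} {F : {set T}} {x y} :
  independent G F -> x \in F -> y \in F -> ~~ adj G x y.
Proof.
move=> /andP [_ /forallP H] hx hy.
by have := H x; rewrite hx /= => /forallP /(_ y); rewrite hy.
Qed.

Lemma indep_sub {T : finType} {G : graph T} {F : {set T}} : independent G F -> F \subset verts G.
Proof. by case/andP. Qed.

Lemma indepI {T : finType} {G : graph T} {F : {set T}} :
  F \subset verts G -> (forall x y, x \in F -> y \in F -> ~~ adj G x y) -> independent G F.
Proof.
move=> hs H; apply/andP; split => //.
apply/forallP => x; apply/implyP => hx; apply/forallP => y; apply/implyP => hy; exact: H.
Qed.

Section HnSec.
Variables (T : finType) (n : nat) (G : 'I_n -> graph T) (A : 'I_n -> {set T}).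
Hypothesis disj : forall i j, i != j -> [disjoint verts (G i) & verts (G j)].
Hypothesis AsubV : forall i, A i \subset verts (G i).
Local Notation U := (T + 'I_n)%type.
Local Notation H := (Hn G A).

Lemma own {i i' x} : x \in verts (G i) -> x \in verts (G i') -> i = i'.
Proof.
move=> h1 h2; case: (eqVneq i i') => // ne.
by rewrite (disjointFr (disj _ _ ne) h1) in h2.
Qed.

Definition Gj (j i : 'I_n) := if i == j then delv (G i) (A i) else G i.

Lemma Gj_verts j i : verts (Gj j i) \subset verts (G i).
Proof. rewrite /Gj; case: eqP => _ //; exact: subsetDl. Qed.

Lemma Gj_adj j i x y : x \in verts (Gj j i) -> y \in verts (Gj j i) ->
  adj (G i) x y -> adj (Gj j i) x y.
Proof. rewrite /Gj; case: eqP => _ //= hx hy ->; by rewrite hx hy. Qed.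

Definition emb (g : {ffun 'I_n -> {set T}}) : {set U} :=
  [set u : U | if u is inl x then [exists i, x \in g i] else false].
Definition embj j g : {set U} := inr j |: emb g.
Definition projall (F : {set U}) : {ffun 'I_n -> {set T}} :=
  [ffun i => [set x in verts (G i) | inl x \in F]].
Definition noY (F : {set U}) := [forall j, inr j \notin F].

Lemma famP (Gf : 'I_n -> graph T) (g : {ffun 'I_n -> {set T}}) :
  reflect (forall i, independent (Gf i) (g i))
          (g \in family (fun i (F : {set T}) => independent (Gf i) F)).
Proof. apply: (iffP familyP) => H i; exact (H i). Qed.

Lemma fam_sub {Gf : 'I_n -> graph T} {g : {ffun 'I_n -> {set T}}} :
  (forall i, verts (Gf i) \subset verts (G i)) ->
  g \in family (fun i (F : {set T}) => independent (Gf i) F) -> forall i, g i \subset verts (G i).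
Proof.
move=> hv /famP Hg i; apply: subset_trans (hv i).
exact: indep_sub (Hg i).
Qed.

Lemma projall_emb {g : {ffun 'I_n -> {set T}}} : (forall i, g i \subset verts (G i)) -> projall (emb g) = g.
Proof.
move=> Hg; apply/ffunP => i; apply/setP => x; rewrite ffunE !inE.
apply/andP/idP.
  case=> vx /existsP [i' xi'].
  by have := own vx (subsetP (Hg i') x xi') => ->.
move=> xi; split; first exact: (subsetP (Hg i)).
by apply/existsP; exists i.
Qed.

Lemma projall_embj j {g : {ffun 'I_n -> {set T}}} : (forall i, g i \subset verts (G i)) -> projall (embj j g) = g.
Proof.
move=> Hg; rewrite -{2}(projall_emb Hg); apply/ffunP => i; apply/setP => x.
by rewrite !ffunE !inE.
Qed.

Lemma card_emb {g : {ffun 'I_n -> {set T}}} : (forall i, g i \subset verts (G i)) -> #|emb g| = \sum_i #|g i|.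
Proof.
move=> Hg.
have -> : emb g = inl @: [set x | [exists i, x \in g i]].
  apply/setP => u; case: u => [x|j]; rewrite inE.
    by rewrite mem_imset //; [rewrite inE | exact: inl_inj].
  by apply/esym/imsetP => [[x _]].
rewrite card_imset; last exact: inl_inj.
rewrite -sum1_card big_mkcond /=.
under [RHS]eq_bigr do rewrite -sum1_card big_mkcond /=.
rewrite exchange_big /=; apply: eq_bigr => x _.
rewrite inE; case: existsP => [[i0 h0]|nh].
  rewrite (bigD1 i0) //= h0 big1 // => i ne; case: ifP => // hi.
  by have := own (subsetP (Hg i) x hi) (subsetP (Hg i0) x h0) => E; rewrite E eqxx in ne.
by rewrite big1 // => i _; case: ifP => // hi; case: nh; exists i.
Qed.

Lemma emb_pair {Gf : 'I_n -> graph T} {g : {ffun 'I_n -> {set T}}} {x y i i'} :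
  (forall i, verts (Gf i) \subset verts (G i)) ->
  (forall i x y, x \in verts (Gf i) -> y \in verts (Gf i) -> adj (G i) x y -> adj (Gf i) x y) ->
  g \in family (fun i (F : {set T}) => independent (Gf i) F) ->
  x \in g i -> y \in g i' -> ~~ adj H (inl x) (inl y).
Proof.
move=> hv ha Hfam hx hy; have /famP Hg := Hfam.
have hs := fam_sub hv Hfam.
apply/negP => /existsP [i'' /and3P [hadj vx vy]].
have E1 := own vx (subsetP (hs i) x hx).
have E2 := own vy (subsetP (hs i') y hy).
subst i'' i'.
have sx := subsetP (indep_sub (Hg i)) x hx.
have sy := subsetP (indep_sub (Hg i)) y hy.
by move/negP: (indepP (Hg i) hx hy); apply; apply: ha.
Qed.

Lemma emb_indep {Gf : 'I_n -> graph T} {g : {ffun 'I_n -> {set T}}} :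
  (forall i, verts (Gf i) \subset verts (G i)) ->
  (forall i x y, x \in verts (Gf i) -> y \in verts (Gf i) -> adj (G i) x y -> adj (Gf i) x y) ->
  g \in family (fun i (F : {set T}) => independent (Gf i) F) -> independent H (emb g).
Proof.
move=> hv ha Hfam; have hs := fam_sub hv Hfam.
apply: indepI.
  apply/subsetP => u; case: u => [x|j]; rewrite !inE //.
  case/existsP => i hi; apply/existsP; exists i; exact: (subsetP (hs i)).
move=> u v; case: u => [x|j]; case: v => [y|j']; rewrite !inE //.
move=> /existsP [i hx] /existsP [i' hy]; exact: emb_pair hv ha Hfam hx hy.
Qed.

Lemma embj_indep {j} {g : {ffun 'I_n -> {set T}}} :
  g \in family (fun i (F : {set T}) => independent (Gj j i) F) -> independent H (embj j g).
Proof.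
move=> Hfam; have hs := fam_sub (@Gj_verts j) Hfam.
have /famP Hg := Hfam.
have hA : forall i y, y \in g i -> y \notin A j.
  move=> i y hy; case: (eqVneq i j) => [E|ne].
    subst i; have := subsetP (indep_sub (Hg j)) y hy; rewrite /Gj eqxx /= inE.
    by case/andP.
  apply/negP => hyA.
  by have := own (subsetP (hs i) y hy) (subsetP (AsubV j) y hyA) => E; rewrite E eqxx in ne.
apply: indepI.
  apply/subsetP => u; rewrite in_setU1 => /orP [/eqP -> //|]; first by rewrite inE.
  case: u => [x|j']; rewrite !inE //.
  case/existsP => i hi; apply/existsP; exists i; exact: (subsetP (hs i)).
move=> u v; rewrite !in_setU1.
move=> /orP [/eqP ->|hu] /orP [/eqP ->|hv] /=.
- by rewrite negbK.
- case: v hv => [y|j']; rewrite inE //= => /existsP [i hy]; exact: hA hy.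
- case: u hu => [x|j']; rewrite inE //= => /existsP [i hx]; exact: hA hx.
- case: u hu => [x|j']; rewrite inE //; case: v hv => [y|j'']; rewrite inE //.
  move=> /existsP [i hy] /existsP [i' hx].
  exact: emb_pair (@Gj_verts j) (@Gj_adj j) Hfam hx hy.
Qed.


Lemma inl_verts x : (inl x \in verts H) = [exists i, x \in verts (G i)].
Proof. by rewrite inE. Qed.

Lemma proj_fam {F} : independent H F -> forall i, independent (G i) (projall F i).
Proof.
move=> HF i; apply: indepI.
  by apply/subsetP => x; rewrite ffunE inE => /andP [].
move=> x y; rewrite !ffunE !inE => /andP [vx hx] /andP [vy hy].
apply/negP => hadj; move/negP: (indepP HF hx hy); apply.
by apply/existsP; exists i; rewrite hadj vx vy.
Qed.

Lemma emb_proj {F} : independent H F -> [set u in F | if u is inl _ then true else false] = emb (projall F).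
Proof.
move=> HF; apply/setP => u; case: u => [x|j]; rewrite !inE ?andbF //= andbT.
apply/idP/existsP.
  move=> hx; have := subsetP (indep_sub HF) _ hx; rewrite inl_verts => /existsP [i vi].
  by exists i; rewrite ffunE inE vi hx.
by case=> i; rewrite ffunE inE => /andP [].
Qed.

Lemma Y_uniq {F i j} : independent H F -> inr i \in F -> inr j \in F -> i = j.
Proof. by move=> HF hi hj; have := indepP HF hi hj; rewrite /= negbK => /eqP. Qed.

Lemma noY_emb {F} : independent H F -> noY F -> F = emb (projall F).
Proof.
move=> HF hY; rewrite -emb_proj //; apply/setP => u; rewrite inE.
case: u => [x|j]; rewrite ?andbT ?andbF //.
by apply/negbTE; move/forallP: hY => /(_ j).
Qed.

Lemma Y_embj {F j} : independent H F -> inr j \in F -> F = embj j (projall F).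
Proof.
move=> HF hj; rewrite /embj -emb_proj //; apply/setP => u; rewrite !inE.
case: u => [x|j']; rewrite ?andbT ?andbF //=.
rewrite orbF; apply/idP/eqP => [hj'|-> //].
by rewrite (Y_uniq HF hj' hj).
Qed.

Lemma projj_fam {F j} : independent H F -> inr j \in F ->
  forall i, independent (Gj j i) (projall F i).
Proof.
move=> HF hj i; rewrite /Gj; case: (eqVneq i j) => [->|_]; last exact: proj_fam.
apply: indepI.
  apply/subsetP => x; rewrite ffunE !inE => /andP [vx hx]; rewrite vx andbT.
  apply/negP => xA; have := indepP HF hx hj; by rewrite /= xA.
move=> x y hx hy; apply/negP => /and3P [hadj _ _].
by move/negP: (indepP (proj_fam HF j) hx hy); apply.
Qed.

Local Open Scope ring_scope.

Lemma sum_noY (R : nmodType) (w : nat -> R) :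
  \sum_(F | independent H F && noY F) w #|F| =
  \sum_(g in family (fun i (F : {set T}) => independent (G i) F)) w (\sum_i #|g i|)%N.
Proof.
have hv : forall i, verts (G i) \subset verts (G i) by move=> i; exact: subxx.
have ha : forall i x y, x \in verts (G i) -> y \in verts (G i) -> adj (G i) x y -> adj (G i) x y by [].
rewrite (eq_bigl (fun F => F \in emb @: [set g | g \in family (fun i (F : {set T}) => independent (G i) F)])).
  rewrite big_imset /=.
    apply: eq_big => g; first by rewrite inE.
    by move=> Hg; rewrite card_emb //; apply: fam_sub hv _; rewrite inE in Hg.
  move=> g1 g2; rewrite !inE => H1 H2 E.
  by rewrite -(projall_emb (fam_sub hv H1)) E (projall_emb (fam_sub hv H2)).
move=> F; apply/andP/imsetP.
  case=> HF hY; exists (projall F); last exact: noY_emb.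
  by rewrite inE; apply/famP; exact: proj_fam.
case=> g; rewrite inE => Hg ->; split; first exact: emb_indep hv ha Hg.
by apply/forallP => j; rewrite inE.
Qed.

Lemma sum_Y (R : nmodType) (w : nat -> R) j :
  \sum_(F | independent H F && (inr j \in F)) w #|F| =
  \sum_(g in family (fun i (F : {set T}) => independent (Gj j i) F)) w (\sum_i #|g i|)%N.+1.
Proof.
rewrite (eq_bigl (fun F => F \in embj j @: [set g | g \in family (fun i (F : {set T}) => independent (Gj j i) F)])).
  rewrite big_imset /=.
    apply: eq_big => g; first by rewrite inE.
    move=> Hg; rewrite inE in Hg; rewrite /embj cardsU1 card_emb; last exact: fam_sub (@Gj_verts j) Hg.
    by rewrite inE add1n.
  move=> g1 g2; rewrite !inE => H1 H2 E.
  by rewrite -(projall_embj j (fam_sub (@Gj_verts j) H1)) E (projall_embj j (fam_sub (@Gj_verts j) H2)).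
move=> F; apply/andP/imsetP.
  case=> HF hj; exists (projall F); last exact: Y_embj.
  by rewrite inE; apply/famP; exact: projj_fam.
case=> g; rewrite inE => Hg ->; split; first exact: embj_indep Hg.
by rewrite /embj setU11.
Qed.

Hypothesis npos : (0 < n)%N.

Lemma split_Y (R : nmodType) (w : nat -> R) :
  \sum_(F | independent H F) w #|F| =
  \sum_(F | independent H F && noY F) w #|F| +
  \sum_j \sum_(F | independent H F && (inr j \in F)) w #|F|.
Proof.
rewrite (bigID noY) /=; congr (_ + _).
pose j0 := Ordinal npos.
rewrite (partition_big (fun F : {set U} => odflt j0 [pick j | inr j \in F]) xpredT) //=.
apply: eq_bigr => j _; apply: eq_bigl => F.
case: (boolP (independent H F)) => //= HF.
case: pickP => [j' hj' | hnone] /=.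
  have -> : ~~ noY F by apply/negP => /forallP /(_ j'); rewrite hj'.
  apply/eqP/idP => [<- //| hj]; exact: Y_uniq HF hj' hj.
have -> : noY F by apply/forallP => j'; rewrite hnone.
by rewrite hnone.
Qed.

End HnSec.

Local Open Scope ring_scope.

Local Open Scope ring_scope.

Lemma prod_hpoly (T : finType) n (Gf : 'I_n -> graph T) :
  \prod_i hpoly (Gf i) =
  \sum_(g in family (fun i (F : {set T}) => independent (Gf i) F))
     'X ^+ (\sum_i #|g i|)%N * (1 - 'X) ^+ ((\sum_i alpha (Gf i)) - \sum_i #|g i|)%N.
Proof.
rewrite /hpoly (bigA_distr_big_dep _ (fun i (F : {set T}) => 'X ^+ #|F| * (1 - 'X) ^+ (alpha (Gf i) - #|F|)%N)).
apply: eq_bigr => g /familyP Hg.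
rewrite big_split /= !prodrXr; congr (_ * _); congr (_ ^+ _).
rewrite sumnB // => i _; apply: face_le_alpha; exact (Hg i).
Qed.

Lemma pdeg_mul (p q : {poly int}) : p != 0 -> q != 0 -> pdeg (p * q) = (pdeg p + pdeg q)%N.
Proof.
move=> hp hq; rewrite /pdeg size_mul //.
have := size_poly_gt0 p; have := size_poly_gt0 q; rewrite hp hq.
case: (size p) => [|sp] //; case: (size q) => [|sq] //.
by rewrite addnS addSn.
Qed.

Lemma pdeg_prod (I : Type) (r : seq I) (P : pred I) (F : I -> {poly int}) :
  (forall i, P i -> F i != 0) ->
  \prod_(i <- r | P i) F i != 0 /\ pdeg (\prod_(i <- r | P i) F i) = (\sum_(i <- r | P i) pdeg (F i))%N.
Proof.
move=> H; elim: r => [|a r [IH1 IH2]]; first by rewrite !big_nil oner_eq0 /pdeg size_poly1.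
rewrite !big_cons; case: ifP => // Pa.
rewrite mulf_neq0 ?H //; split => //; rewrite pdeg_mul ?H // IH2 //.
Qed.

Local Open Scope ring_scope.

Lemma stepA (T : finType) (n : nat) (G : 'I_n -> graph T) (A : 'I_n -> {set T})
  (npos : (0 < n)%N)
  (disj : forall i j, i != j -> [disjoint verts (G i) & verts (G j)])
  (AsubV : forall i, A i \subset verts (G i))
  (tpos : forall i, (alpha (delv (G i) (A i)) < alpha (G i))%N) N :
  let D := (\sum_(i < n) alpha (G i))%N in
  let t i := (alpha (G i) - alpha (delv (G i) (A i)))%N in
  eqN N (\prod_i hpoly (G i) +
         \sum_j 'X * (1 - 'X) ^+ (t j).-1 * \prod_i hpoly (Gj T n G A j i))
        ((1 - 'X) ^+ D * HSN (Hn G A) N).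
Proof.
move=> D t.
have Dj : forall j, ((\sum_i alpha (Gj T n G A j i)) + t j = D)%N.
  move=> j; rewrite /D (bigD1 j) //= [X in _ = X](bigD1 j) //= /Gj eqxx.
  have := tpos j; rewrite /t.
  under eq_bigr => i /negbTE -> do [].
  lia.
apply: eqN_sym.
have E1 := @split_Y T n G A npos _ (fun k => CN k N); simpl in E1.
have E2 := @sum_noY T n G A disj _ (fun k => CN k N); simpl in E2.
have E3 := @sum_Y T n G A disj AsubV _ (fun k => CN k N); simpl in E3.
rewrite HSN_faces E1 E2 mulrDr prod_hpoly.
apply: eqN_add.
  apply: eqN_series => g /familyP Hg; apply: leq_sum => i _; apply: face_le_alpha; exact (Hg i).
rewrite mulr_sumr; apply: eqN_sum => j _.
rewrite E3 prod_hpoly [X in eqN _ _ X]mulr_sumr.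
eapply eqN_trans.
  apply: eqN_series => g /familyP Hg.
  have : ((\sum_i #|g i|) <= \sum_i alpha (Gj T n G A j i))%N.
    apply: leq_sum => i _; apply: face_le_alpha; exact (Hg i).
  have := Dj j; have := tpos j; rewrite /t => h1 h2 h3; apply: (leq_ltn_trans h3); lia.
apply: eqN_sum => g /familyP Hg.
move=> k hk; congr (_`_k).
have : ((\sum_i #|g i|) <= \sum_i alpha (Gj T n G A j i))%N.
  apply: leq_sum => i _; apply: face_le_alpha; exact (Hg i).
move=> le.
set K := (\sum_i #|g i|)%N; set Dj' := (\sum_i alpha (Gj T n G A j i))%N.
have E : (D - K.+1 = (t j).-1 + (Dj' - K))%N.
  move: le (Dj j) (tpos j); rewrite /t -/K -/Dj'; lia.
by rewrite E exprD exprS -!mulrA (mulrCA 'X^K).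
Qed.

Lemma stepB (T : finType) (n : nat) (G : 'I_n -> graph T) (A : 'I_n -> {set T}) (t : 'I_n -> nat) :
  0 < (\prod_i hpoly (G i) +
         \sum_j 'X * (1 - 'X) ^+ (t j).-1 * \prod_i hpoly (Gj T n G A j i)).[1].
Proof.
rewrite hornerD horner_sum horner_prod.
have h1 : 0 < \prod_i (hpoly (G i)).[1] by apply: prodr_gt0 => i _; exact: hpoly1.
have h2 : 0 <= \sum_j ('X * (1 - 'X) ^+ (t j).-1 * \prod_i hpoly (Gj T n G A j i)).[1].
  apply: sumr_ge0 => j _; rewrite !hornerM horner_exp horner_prod !hornerE.
  apply: mulr_ge0; first by rewrite subrr exprn_ge0.
  by apply: prodr_ge0 => i _; apply: ltW; exact: hpoly1.
lra.
Qed.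

Lemma prodN_int n (f : 'I_n -> int) : \prod_i (- f i) = (-1) ^+ n * \prod_i f i.
Proof. have := prodrN (mem 'I_n) f; rewrite card_ord; by move=> <-. Qed.

Lemma size_pdeg (p : {poly int}) : p != 0 -> size p = (pdeg p).+1.
Proof. by move=> hp; rewrite /pdeg prednK // size_poly_gt0. Qed.

Lemma one_subX_nz : (1 - 'X : {poly int}) != 0.
Proof. by rewrite -size_poly_eq0 -opprB size_polyN -polyC1 size_XsubC. Qed.

Lemma pdeg_1subX m : pdeg ((1 - 'X : {poly int}) ^+ m) = m.
Proof. by rewrite /pdeg size_exp -opprB size_polyN -polyC1 size_XsubC mul1n. Qed.

Lemma lead_1subX m : lead_coef ((1 - 'X : {poly int}) ^+ m) = (-1) ^+ m.
Proof. by rewrite lead_coef_exp -opprB lead_coefN -polyC1 lead_coefXsubC. Qed.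

Lemma stepD n (hG hGA : 'I_n -> {poly int}) (t : 'I_n -> nat) :
  (0 < n)%N ->
  (forall i, odd (t i)) ->
  (forall i, pdeg (hG i) = (pdeg (hGA i) + (t i).-1)%N) ->
  ((forall i, 0 < lead_coef (hG i) /\ 0 < lead_coef (hGA i)) \/
   (forall i, lead_coef (hG i) < 0 /\ lead_coef (hGA i) < 0)) ->
  pdeg (\prod_i hG i +
        \sum_j 'X * (1 - 'X) ^+ (t j).-1 * \prod_i (if i == j then hGA i else hG i))
  = (1 + \sum_i pdeg (hG i))%N.
Proof.
move=> npos todd hdeg hsign.
have nz : forall i, hG i != 0 /\ hGA i != 0.
  move=> i; case: hsign => /(_ i) [h1 h2]; rewrite -!lead_coef_eq0.
    by rewrite !gt_eqF.
  by rewrite !lt_eqF.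
set S := (\sum_i pdeg (hG i))%N.
pose r j i := if i == j then hGA i else hG i.
have rnz : forall j i, r j i != 0.
  move=> j i; rewrite /r; case: (i == j); [exact: (nz i).2 | exact: (nz i).1].
have [P0nz P0deg] := @pdeg_prod _ (index_enum 'I_n) xpredT hG (fun i _ => (nz i).1).
pose Q j := 'X * (1 - 'X) ^+ (t j).-1 * \prod_i r j i.
have Qnz : forall j, Q j != 0.
  move=> j; rewrite /Q !mulf_neq0 ?polyX_eq0 ?expf_neq0 ?one_subX_nz //.
  exact: (@pdeg_prod _ (index_enum 'I_n) xpredT (r j) (fun i _ => rnz j i)).1.
have Qdeg : forall j, pdeg (Q j) = S.+1.
  move=> j; have [Rnz Rdeg] := @pdeg_prod _ (index_enum 'I_n) xpredT (r j) (fun i _ => rnz j i).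
  rewrite /Q !pdeg_mul ?polyX_eq0 ?expf_neq0 ?one_subX_nz ?mulf_neq0 //.
  rewrite pdeg_1subX Rdeg /pdeg size_polyX /= /S.
  rewrite (bigD1 j) //= [X in _ = X.+1](bigD1 j) //= /r eqxx hdeg.
  rewrite (eq_bigr (fun i => (size (hG i)).-1)); last by move=> i /negbTE ->.
    rewrite /pdeg add0n -[1%R]/1%N; set a := (size (hGA j)).-1; set b := (\sum_(i < n | i != j) (size (hG i)).-1)%N; set c := (t j).-1; rewrite /= addnC; lia.
  - by rewrite polyX_eq0.
  - exact: expf_neq0 one_subX_nz.
have Qlead : forall j, lead_coef (Q j) = \prod_i lead_coef (r j i).
  move=> j; rewrite /Q !lead_coefM lead_coefX lead_1subX lead_coef_prod mul1r.
  have := todd j; case: (t j) => [|tj] //= /negbTE ho.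
  by rewrite -signr_odd ho expr0 mul1r.
pose L j := lead_coef (Q j).
have [eps [epsnz Heps]] : exists eps : int, eps != 0 /\ forall j, 0 < eps * L j.
  case: hsign => H.
    exists 1; split => // j; rewrite mul1r /L Qlead; apply: prodr_gt0 => i _.
    by rewrite /r; case: (i == j); [exact (H i).2 | exact (H i).1].
  exists ((-1) ^+ n); split; first by rewrite signr_eq0.
  move=> j; rewrite /L Qlead -prodN_int; apply: prodr_gt0 => i _.
  by rewrite oppr_gt0 /r; case: (i == j); [exact (H i).2 | exact (H i).1].
have Lsum : \sum_j L j != 0.
  apply/eqP => E.
  have : 0 < eps * \sum_j L j.
    rewrite mulr_sumr (bigD1 (Ordinal npos)) //=.
    have := Heps (Ordinal npos).
    have : 0 <= \sum_(j | j != Ordinal npos) eps * L j.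
      by apply: sumr_ge0 => j _; apply: ltW.
    by move=> h1 h2; apply: (lt_le_trans h2); rewrite lerDl.
  by rewrite E mulr0 ltxx.
have -> : (\sum_j 'X * (1 - 'X) ^+ (t j).-1 * \prod_i (if i == j then hGA i else hG i)) = \sum_j Q j by [].
have szP : size (\prod_i hG i) = S.+1 by rewrite size_pdeg // P0deg.
have szQ : forall j, size (Q j) = S.+2 by move=> j; rewrite size_pdeg // Qdeg.
have coefS : (\prod_i hG i + \sum_j Q j)`_S.+1 = \sum_j L j.
  rewrite coefD coef_sum nth_default ?szP // add0r.
  by apply: eq_bigr => j _; rewrite /L lead_coefE szQ.
have Hle : (size (\prod_i hG i + \sum_j Q j)%R <= S.+2)%N.
  apply/leq_sizeP => k hk; rewrite coefD coef_sum nth_default ?szP 1?ltnW // add0r.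
  by rewrite big1 // => j _; rewrite nth_default // szQ.
have sz : size (\prod_i hG i + \sum_j Q j) = S.+2.
  apply/eqP; rewrite eqn_leq Hle /= ltnNge; apply/negP => h.
  by move: Lsum; rewrite -coefS nth_default // eqxx.
by rewrite /pdeg sz add1n.
Qed.

Lemma main_core (T : finType) (n : nat) (G : 'I_n -> graph T) (A : 'I_n -> {set T})
  (dG dGA : 'I_n -> nat) (hG hGA : 'I_n -> {poly int}) (d : nat) (h : {poly int}) :
  (0 < n)%N ->
  (forall i j, i != j -> [disjoint verts (G i) & verts (G j)]) ->
  (forall i, A i \subset verts (G i)) ->
  (forall i, is_hilb (G i) (dG i) (hG i)) ->
  (forall i, is_hilb (delv (G i) (A i)) (dGA i) (hGA i)) ->
  (forall i, (alpha (delv (G i) (A i)) <= alpha (G i))%N /\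
             odd (alpha (G i) - alpha (delv (G i) (A i))) /\
             (1 <= alpha (G i) - alpha (delv (G i) (A i)))%N) ->
  (forall i, ((pdeg (hG i))%:Z - (pdeg (hGA i))%:Z =
              (alpha (G i))%:Z - (alpha (delv (G i) (A i)))%:Z - 1)) ->
  ((forall i, (0 < lead_coef (hG i)) /\ (0 < lead_coef (hGA i))) \/
   (forall i, (lead_coef (hG i) < 0) /\ (lead_coef (hGA i) < 0))) ->
  is_hilb (Hn G A) d h ->
  d = (\sum_(i < n) alpha (G i))%N /\ pdeg h = (1 + \sum_(i < n) pdeg (hG i))%N.
Proof.
move=> npos disj AsubV HG HGA Ha Hb Hc Hh.
have EG : forall i, hG i = hpoly (G i) by move=> i; exact: (hilb_unique _ _ _ _ (HG i)).2.
have EGA : forall i, hGA i = hpoly (delv (G i) (A i)) by move=> i; exact: (hilb_unique _ _ _ _ (HGA i)).2.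
pose t i := (alpha (G i) - alpha (delv (G i) (A i)))%N.
have tpos : forall i, (alpha (delv (G i) (A i)) < alpha (G i))%N.
  move=> i; have [h1 [_ h3]] := Ha i; lia.
have HA := @stepA T n G A npos disj AsubV tpos.
have HB := @stepB T n G A t.
have [dD hE] := @uniq_hilb (HSN (Hn G A)) d _ h _ (proj1 Hh) (lt0r_neq0 HB) (@is_hilb_eqN _ _ d h Hh) HA.
split => //; rewrite hE.
have -> : \prod_i hpoly (G i) = \prod_i hG i by apply: eq_bigr => i _; rewrite EG.
have Ej : forall j, \prod_i hpoly (Gj T n G A j i) = \prod_i (if i == j then hGA i else hG i).
  move=> j; apply: eq_bigr => i _; rewrite /Gj; case: (i == j); by rewrite ?EG ?EGA.
rewrite [X in _ + X](eq_bigr (fun j => 'X * (1 - 'X) ^+ (t j).-1 * \prod_i (if i == j then hGA i else hG i))); last first.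
  by move=> j _; rewrite Ej.
apply: stepD => //.
- by move=> i; have [_ [h2 _]] := Ha i.
- move=> i; have [h1 [_ h3]] := Ha i; have := Hb i; rewrite /t; lia.
Qed.

Local Close Scope ring_scope.

Theorem lemma3p2 (T : finType) (n : nat) (G : 'I_n -> graph T) (A : 'I_n -> {set T})
  (dG dGA : 'I_n -> nat) (hG hGA : 'I_n -> {poly int}) :
  0 < n ->
  (forall i, simple_graph (G i)) ->
  (forall i j, i != j -> [disjoint verts (G i) & verts (G j)]) ->
  (forall i, A i \subset verts (G i)) ->
  (forall i, is_hilb (G i) (dG i) (hG i)) ->
  (forall i, is_hilb (delv (G i) (A i)) (dGA i) (hGA i)) ->
  (* (a) t_i = alpha(G_i) - alpha(G_i \ A_i) is odd and >= 1 *)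
  (forall i, (alpha (delv (G i) (A i)) <= alpha (G i)) /\
             odd (alpha (G i) - alpha (delv (G i) (A i))) /\
             1 <= alpha (G i) - alpha (delv (G i) (A i))) ->
  (* (b) deg(G_i) - deg(G_i \ A_i) = t_i - 1 *)
  (forall i, ((pdeg (hG i))%:Z - (pdeg (hGA i))%:Z =
              (alpha (G i))%:Z - (alpha (delv (G i) (A i)))%:Z - 1)%R) ->
  (* (c) leading coefficients all positive or all negative *)
  ((forall i, (0 < lead_coef (hG i))%R /\ (0 < lead_coef (hGA i))%R) \/
   (forall i, (lead_coef (hG i) < 0)%R /\ (lead_coef (hGA i) < 0)%R)) ->
  forall (d : nat) (h : {poly int}), is_hilb (Hn G A) d h ->
    d = \sum_(i < n) alpha (G i) /\ pdeg h = 1 + \sum_(i < n) pdeg (hG i).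
Proof.
move=> npos _ disj AsubV HG HGA Ha Hb Hc d h Hh.
exact: (@main_core _ _ _ _ _ _ _ _ _ _ npos disj AsubV HG HGA Ha Hb Hc Hh).
Qed.
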